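(* For every $n\geq 1$, $$P_n(a_1,\dots,a_n;x_1,\dots,x_n) = \frac{1}{\prod_{i=1}^n x_i}\sum_{\sigma\in S_n}\frac{\exp\big(\sum_{i<j} w_{\sigma(i)\sigma(j)}\big)}{\prod_{j=1}^{n-1} u_{\sigma(j)\sigma(j+1)}},$$ where $w_{jk}:=(a_jx_k-a_kx_j)/2$ and $u_{jk}:=a_j/x_j-a_k/x_k$ (an identity of meromorphic functions of $a_1,\dots,a_n,x_1,\dots,x_n$).
   Context: Let $\zeta(x) := e^{x/2}-e^{-x/2}$. Define $P_1(a_1;x_1):=1/x_1$ and, for $n\geq 2$, $$P_n(a_1,\dots,a_n;x_1,\dots,x_n) := \sum_{\substack{\tau\in S_n\\ \tau(1)=1}} \frac{\prod_{j=2}^{n-1} x_{\tau(j)} \prod_{j=1}^{n-1}\zeta\Big(\big(\sum_{k=1}^{j} a_{\tau(k)}\big)x_{\tau(j+1)} - a_{\tau(j+1)}\big(\sum_{k=1}^{j} x_{\tau(k)}\big)\Big)}{\prod_{j=1}^{n-1}\big(a_{\tau(j)}x_{\tau(j+1)} - a_{\tau(j+1)}x_{\tau(j)}\big)}.$$ *)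

(* Defs.v *)
From HB Require Import structures.
From mathcomp Require Import all_boot all_order all_algebra all_fingroup.
From mathcomp Require Import all_classical all_reals all_analysis.
Set Implicit Arguments. Unset Strict Implicit. Unset Printing Implicit Defensive.
Import Order.TTheory GRing.Theory Num.Theory.
Local Open Scope ring_scope.

Definition zeta {R : realType} (x : R) : R := expR (x / 2) - expR (- (x / 2)).

(* P_{n+1}(a_1..a_{n+1}; x_1..x_{n+1}), indices shifted to 0..n.
   tau(1)=1 becomes tau ord0 = ord0; t k := tau(k) for k a nat < n+1. *)
Definition Pn {R : realType} (n : nat) (a x : 'I_n.+1 -> R) : R :=
  match n with
  | 0 => (x ord0)^-1
  | _ =>
    \sum_(tau : 'S_n.+1 | tau ord0 == ord0)
      let t := fun k : nat => tau (inord k) in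
      (\prod_(1 <= j < n) x (t j)) *
      (\prod_(0 <= j < n)
          zeta ((\sum_(0 <= k < j.+1) a (t k)) * x (t j.+1)
                - a (t j.+1) * (\sum_(0 <= k < j.+1) x (t k)))) /
      (\prod_(0 <= j < n) (a (t j) * x (t j.+1) - a (t j.+1) * x (t j)))
  end.

Definition wjk {R : realType} (n : nat) (a x : 'I_n.+1 -> R) (j k : 'I_n.+1) : R :=
  (a j * x k - a k * x j) / 2.

Definition ujk {R : realType} (n : nat) (a x : 'I_n.+1 -> R) (j k : 'I_n.+1) : R :=
  a j / x j - a k / x k.

Definition Prop31_rhs {R : realType} (n : nat) (a x : 'I_n.+1 -> R) : R :=
  (\prod_(i < n.+1) x i)^-1 *
  \sum_(sigma : 'S_n.+1)
     expR (\sum_(i < n.+1) \sum_(j < n.+1 | (i < j)%N) wjk a x (sigma i) (sigma j)) /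
     (\prod_(0 <= j < n) ujk a x (sigma (inord j)) (sigma (inord j.+1))).

(* Main.v *)
Require Import Defs.
From HB Require Import structures.
From mathcomp Require Import all_boot all_order all_algebra all_fingroup.
From mathcomp Require Import all_classical all_reals all_analysis.
Import Order.TTheory GRing.Theory Num.Theory.
Local Open Scope ring_scope.
From mathcomp Require Import ring.

Set Implicit Arguments. Unset Strict Implicit. Unset Printing Implicit Defensive.

Lemma perms_sum (R : fieldType) (T : eqType) (s : seq T) (G : seq T -> R) :
  uniq s -> (0 < size s)%N ->
  \sum_(t <- permutations s) G t = \sum_(c <- s) \sum_(t <- permutations (rem c s)) G (c :: t).
Proof.
move=> us ns; rewrite (perm_big _ (permutationsE ns)) big_allpairs_dep undup_id //.
Qed.

Lemma perms_size (T : eqType) (s t : seq T) : t \in permutations s -> size t = size s.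
Proof. by rewrite mem_permutations => /perm_size. Qed.

Lemma perms_reindex (R : fieldType) (T : eqType) (s : seq T) (f : seq T -> seq T) (G : seq T -> R) :
  {in permutations s &, injective f} ->
  (forall t, perm_eq t s -> perm_eq (f t) s) ->
  \sum_(t <- permutations s) G (f t) = \sum_(t <- permutations s) G t.
Proof.
move=> finj fperm; rewrite -(big_map f xpredT G); apply: perm_big.
have u1 : uniq (map f (permutations s)) by rewrite map_inj_in_uniq // permutations_uniq.
have sub : {subset map f (permutations s) <= permutations s}.
  by move=> u /mapP[t]; rewrite !mem_permutations => /fperm ? ->.
have [_ eqm] := uniq_min_size u1 sub (eq_leq (esym (size_map _ _))).
by apply: uniq_perm => //; exact: permutations_uniq.
Qed.

Lemma perms_nil (T : eqType) : permutations (@nil T) = [:: [::]].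
Proof. by []. Qed.

Definition Ssum (R : fieldType) (T : eqType) (s : seq T) (G : seq T -> seq T -> R) : R :=
  \sum_(t <- permutations s) \sum_(0 <= k < (size s).+1) G (take k t) (drop k t).

Lemma Ssum_rev_k (R : fieldType) (T : eqType) (s : seq T) (G : seq T -> seq T -> R) :
  Ssum s G = \sum_(t <- permutations s) \sum_(0 <= k < (size s).+1)
                 G (take (size s - k) t) (drop (size s - k) t).
Proof.
rewrite /Ssum; apply: eq_bigr => t _.
rewrite big_nat_rev /=; apply: eq_big_nat => k _.
by rewrite add0n subSS.
Qed.

Lemma Ssum_swap (R : fieldType) (T : eqType) (s : seq T) (G : seq T -> seq T -> R) :
  Ssum s G = Ssum s (fun L R => G R L).
Proof.
rewrite Ssum_rev_k /Ssum exchange_big [RHS]exchange_big /=.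
apply: eq_big_nat => k /andP[_ hk].
rewrite -(@perms_reindex _ _ s (rot k)); last first.
- by move=> t ts; apply: perm_trans ts; rewrite perm_rot.
- by move=> t1 t2 _ _; apply: rot_inj.
rewrite !big_seq; apply: eq_bigr => t /perms_size st.
have sd : size (drop k t) = (size s - k)%N by rewrite size_drop st.
by rewrite /rot take_size_cat // drop_size_cat.
Qed.

Lemma Ssum_prev (R : fieldType) (T : eqType) (s : seq T) (G : seq T -> seq T -> R) :
  Ssum s G = \sum_(t <- permutations s) \sum_(0 <= k < (size s).+1)
                 G (rev (drop k t)) (take k t).
Proof.
rewrite Ssum_rev_k exchange_big [RHS]exchange_big /=.
apply: eq_big_nat => k /andP[_ hk].
rewrite -(@perms_reindex _ _ s (fun t => rev (drop k t) ++ take k t)); last first.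
- move=> t ts; apply: perm_trans ts.
  by rewrite perm_catC -{3}(cat_take_drop k t) perm_cat2l perm_rev.
- move=> t1 t2 /perms_size s1 /perms_size s2 e.
  have sd1 : size (rev (drop k t1)) = (size s - k)%N by rewrite size_rev size_drop s1.
  have sd2 : size (rev (drop k t2)) = (size s - k)%N by rewrite size_rev size_drop s2.
  have := congr1 (take (size s - k)) e; rewrite !take_size_cat // => /(congr1 rev); rewrite !revK => ed.
  have := congr1 (drop (size s - k)) e; rewrite !drop_size_cat // => et.
  by rewrite -(cat_take_drop k t1) -(cat_take_drop k t2) ed et.
rewrite !big_seq; apply: eq_bigr => t /perms_size st.
have sd : size (rev (drop k t)) = (size s - k)%N by rewrite size_rev size_drop st.
by rewrite take_size_cat // drop_size_cat.
Qed.

Lemma Ssum_head (R : fieldType) (T : eqType) (s : seq T) (G : T -> seq T -> seq T -> R) :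
  uniq s ->
  Ssum s (fun L R => if L is l :: L' then G l L' R else 0) =
  \sum_(c <- s) Ssum (rem c s) (G c).
Proof.
case: s => [|c0 s0] us.
  by rewrite /Ssum perms_nil big_seq1 big_nat1 big_nil.
rewrite /Ssum perms_sum //; rewrite big_seq [RHS]big_seq; apply: eq_bigr => c hc.
apply: eq_bigr => t _.
rewrite big_nat_recl // add0r.
have -> : size (rem c (c0 :: s0)) = size s0 by rewrite size_rem.
by [].
Qed.

Lemma Ssum_add (R : fieldType) (T : eqType) (s : seq T) (G1 G2 : seq T -> seq T -> R) :
  Ssum s (fun L R => G1 L R + G2 L R) = Ssum s G1 + Ssum s G2.
Proof. by rewrite /Ssum -big_split /=; apply: eq_bigr => t _; rewrite big_split. Qed.

Lemma Ssum_scale (R : fieldType) (T : eqType) (s : seq T) (k : R) (G : seq T -> seq T -> R) :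
  Ssum s (fun L R => k * G L R) = k * Ssum s G.
Proof. by rewrite /Ssum mulr_sumr; apply: eq_bigr => t _; rewrite mulr_sumr. Qed.

Lemma Ssum_eq (R : fieldType) (T : eqType) (s : seq T) (G1 G2 : seq T -> seq T -> R) :
  (forall t k, t \in permutations s -> G1 (take k t) (drop k t) = G2 (take k t) (drop k t)) ->
  Ssum s G1 = Ssum s G2.
Proof. by move=> h; rewrite /Ssum big_seq [RHS]big_seq; apply: eq_bigr => t ht; apply: eq_bigr => k _; apply: h. Qed.

Definition al (R : fieldType) (T : eqType) (a x : T -> R) c := a c / x c.
Fixpoint chain (R : fieldType) (T : eqType) (a x : T -> R) (z : R) (s : seq T) : R :=
  match s with [::] => 1 | c :: s' => (z - al a x c) * chain a x (al a x c) s' end.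
Definition zet (R : fieldType) (e : R -> R) (y : R) := e (y / 2) - e (- (y / 2)).
Fixpoint Zeta (R : fieldType) (T : eqType) (e : R -> R) (a x : T -> R) (p q : R) (s : seq T) : R :=
  match s with [::] => 1
  | c :: s' => zet e (p * x c - a c * q) * Zeta e a x (p + a c) (q + x c) s' end.
Definition Zsum (R : fieldType) (T : eqType) (e : R -> R) (a x : T -> R) (p q z : R) (s : seq T) :=
  \sum_(t <- permutations s) Zeta e a x p q t / chain a x z t.
Fixpoint Eseq (R : fieldType) (T : eqType) (a x : T -> R) (s : seq T) : R :=
  match s with [::] => 0
  | c :: s' => \sum_(d <- s') (a c * x d - a d * x c) / 2 + Eseq a x s' end.
Definition sa (R : fieldType) (T : eqType) (a : T -> R) (s : seq T) := \sum_(c <- s) a c.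
Definition EV (R : fieldType) (T : eqType) (a x : T -> R) (p q : R) (L Rs : seq T) :=
  Eseq a x (rev L) + Eseq a x Rs + (sa a L * q - p * sa x L) / 2
  + (p * sa x Rs - sa a Rs * q) / 2 + (sa a L * sa x Rs - sa a Rs * sa x L) / 2.
Definition FF (R : fieldType) (T : eqType) (e : R -> R) (a x : T -> R) (p q z : R) (L Rs : seq T) :=
  e (EV a x p q L Rs) / ((-1) ^+ size L * chain a x z L * chain a x z Rs).
Definition chainL (R : fieldType) (T : eqType) (a x : T -> R) (s : seq T) :=
  if s is c :: s' then chain a x (al a x c) s' else 1.
Definition Phi (R : fieldType) (T : eqType) (e : R -> R) (a x : T -> R) (s : seq T) :=
  e (Eseq a x s) / chainL a x s.

Lemma sa_cons (R : fieldType) (T : eqType) (a : T -> R) c s : sa a (c :: s) = a c + sa a s.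
Proof. by rewrite /sa big_cons. Qed.
Lemma sa_nil (R : fieldType) (T : eqType) (a : T -> R) : sa a [::] = 0.
Proof. by rewrite /sa big_nil. Qed.
Lemma sa_cat (R : fieldType) (T : eqType) (a : T -> R) s1 s2 : sa a (s1 ++ s2) = sa a s1 + sa a s2.
Proof. by rewrite /sa big_cat. Qed.
Lemma sa_rev (R : fieldType) (T : eqType) (a : T -> R) s : sa a (rev s) = sa a s.
Proof. by rewrite /sa big_rev. Qed.

Lemma sumw (R : fieldType) (T : eqType) (a x : T -> R) c s :
  \sum_(d <- s) (a c * x d - a d * x c) / 2 = (a c * sa x s - sa a s * x c) / 2.
Proof.
elim: s => [|d s IH]; first by rewrite big_nil !sa_nil; ring.
by rewrite big_cons IH !sa_cons; ring.
Qed.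

Lemma Eseq_cat (R : fieldType) (T : eqType) (a x : T -> R) s1 s2 :
  Eseq a x (s1 ++ s2) = Eseq a x s1 + Eseq a x s2 + (sa a s1 * sa x s2 - sa a s2 * sa x s1) / 2.
Proof.
elim: s1 => [|c s1 IH] /=; first by rewrite !sa_nil; ring.
by rewrite !sumw IH !sa_cat !sa_cons; ring.
Qed.

Lemma EV_consL (R : fieldType) (T : eqType) (a x : T -> R) p q l L Rs :
  EV a x p q (l :: L) Rs = EV a x (p + a l) (q + x l) L Rs - (p * x l - a l * q) / 2.
Proof.
rewrite /EV rev_cons -cats1 Eseq_cat /= big_nil !sa_cons !sa_rev !sa_nil; ring.
Qed.

Lemma EV_consR (R : fieldType) (T : eqType) (a x : T -> R) p q L r Rs :
  EV a x p q L (r :: Rs) = EV a x (p + a r) (q + x r) L Rs + (p * x r - a r * q) / 2.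
Proof. by rewrite /EV /= sumw !sa_cons; ring. Qed.

Lemma Eseq_Phi (R : fieldType) (T : eqType) (a x : T -> R) L c Rs :
  Eseq a x (rev L ++ c :: Rs) = EV a x (a c) (x c) L Rs.
Proof. by rewrite Eseq_cat /= sumw /EV !sa_cons !sa_rev; ring. Qed.

Lemma chainL_rev (R : fieldType) (T : eqType) (a x : T -> R) L c Rs :
  chainL a x (rev L ++ c :: Rs) = (-1) ^+ size L * chain a x (al a x c) L * chain a x (al a x c) Rs.
Proof.
elim: L c Rs => [|l L IH] c Rs /=; first by rewrite expr0 !mul1r.
rewrite rev_cons cat_rcons IH /= exprS; ring.
Qed.

Lemma Phi_FF (R : fieldType) (T : eqType) (e : R -> R) (a x : T -> R) L c Rs :
  Phi e a x (rev L ++ c :: Rs) = FF e a x (a c) (x c) (al a x c) L Rs.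
Proof. by rewrite /Phi /FF Eseq_Phi chainL_rev. Qed.

Lemma chain_neq0 (R : fieldType) (T : eqType) (a x : T -> R) z s :
  (forall c d, c != d -> al a x c != al a x d) ->
  uniq s -> (forall c, c \in s -> al a x c != z) -> chain a x z s != 0.
Proof.
move=> hinj; elim: s z => [|c s IH] z /=; first by rewrite oner_neq0.
move=> /andP[cs us] hz; rewrite mulf_neq0 //.
  by rewrite subr_eq0 eq_sym hz // mem_head.
apply: IH => // d hd; apply: hinj; apply: contraNneq cs => <-; exact: hd.
Qed.

Lemma RHS_H (R : fieldType) (T : eqType) (e : R -> R) (a x : T -> R) c0 s :
  c0 \notin s ->
  \sum_(t <- permutations (c0 :: s)) Phi e a x t = Ssum s (FF e a x (a c0) (x c0) (al a x c0)).
Proof.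
move=> c0s.
rewrite (perm_big _ (permutationsErot c0 s)) big_allpairs_dep /=.
rewrite Ssum_prev big_seq [RHS]big_seq; apply: eq_bigr => t ht.
have st := perms_size ht.
have c0t : c0 \notin t by move: ht; rewrite mem_permutations => /perm_mem ->.
rewrite memNindex // st addn1.
have -> : iota 0 (size s).+1 = index_iota 0 (size s).+1 by rewrite /index_iota subn0.
rewrite big_nat_recl // big_nat_recr //= rot0 addrC; congr (_ + _).
  apply: eq_big_nat => i _.
  by rewrite /rot /= -{1}(revK (drop i t)) Phi_FF.
by rewrite -st drop_size take_size -(cat0s (c0 :: t)) -[[::]]/(rev [::]) Phi_FF.
Qed.

Lemma FF_split (R : fieldType) (T : eqType) (e : R -> R) (a x : T -> R) p q z L Rs :
  (forall u v, e (u + v) = e u * e v) -> (forall u, e (- u) = (e u)^-1) -> (forall u, e u != 0) ->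
  (forall c d, c != d -> al a x c != al a x d) ->
  uniq (L ++ Rs) -> (forall c, c \in L ++ Rs -> al a x c != z) -> L ++ Rs != [::] ->
  FF e a x p q z L Rs =
    (if L is l :: L' then - (e (- ((p * x l - a l * q) / 2)) / (z - al a x l))
        * FF e a x (p + a l) (q + x l) (al a x l) L' Rs else 0)
  + (if Rs is r :: Rs' then e ((p * x r - a r * q) / 2) / (z - al a x r)
        * FF e a x (p + a r) (q + x r) (al a x r) L Rs' else 0).
Proof.
move=> eD eN enz hinj u hz ne.
have chnz : forall w s, uniq s -> (forall c, c \in s -> al a x c != w) -> chain a x w s != 0.
  by move=> w s us hw; apply: chain_neq0.
have sgnz : forall k, (-1) ^+ k != 0 :> R by move=> k; rewrite signr_eq0.
case: L u hz ne => [|l L']; case: Rs => [|r Rs'] //= u hz _.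
- rewrite add0r /FF EV_consR eD /= expr0.
  move: u => /andP[rR uR].
  have h1 : z - al a x r != 0 by rewrite subr_eq0 eq_sym hz // mem_head.
  have h2 : chain a x (al a x r) Rs' != 0.
    by apply: chnz => // c hc; apply: hinj; apply: contraNneq rR => <-.
  have h3 := enz ((p * x r - a r * q) / 2).
  field; rewrite ?h1 ?h2 ?h3 //.
- rewrite cats0 in u hz.
  rewrite addr0 /FF EV_consL eD eN /=.
  move: u => /andP[lL uL].
  have h1 : z - al a x l != 0 by rewrite subr_eq0 eq_sym hz // mem_head.
  have h2 : chain a x (al a x l) L' != 0.
    by apply: chnz => // c hc; apply: hinj; apply: contraNneq lL => <-.
  have h3 := enz ((p * x l - a l * q) / 2).
  have h4 := sgnz (size L').
  have h5 := enz (EV a x (p + a l) (q + x l) L' [::]).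
  rewrite exprS; field; rewrite ?h1 ?h2 ?h3 ?h4 ?h5 ?oppr_eq0 ?oner_eq0 //.
- move: u => /andP[lL uL].
  move: uL; rewrite cat_uniq /= => /and3P[uL /norP[rL _] /andP[rR uR]].
  have hz' : forall c, c \in L' ++ r :: Rs' -> al a x c != z by move=> c hc; apply: hz; rewrite inE hc orbT.
  have h1 : z - al a x l != 0 by rewrite subr_eq0 eq_sym hz // mem_head.
  have h1' : z - al a x r != 0 by rewrite subr_eq0 eq_sym hz' // mem_cat mem_head orbT.
  have lnr : l != r by apply: contraNneq lL => ->; rewrite mem_cat mem_head orbT.
  have h6 : al a x l - al a x r != 0 by rewrite subr_eq0 hinj.
  have h6' : al a x r - al a x l != 0 by rewrite subr_eq0 hinj // eq_sym.
  have h2 : chain a x (al a x l) L' != 0.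
    by apply: chnz => // c hc; apply: hinj; apply: contraNneq lL => <-; rewrite mem_cat hc.
  have h2' : chain a x (al a x r) Rs' != 0.
    by apply: chnz => // c hc; apply: hinj; apply: contraNneq rR => <-.
  have h3 := enz ((p * x l - a l * q) / 2).
  have h3' := enz ((p * x r - a r * q) / 2).
  have h4 := sgnz (size L').
  have e1 : EV a x (p + a l) (q + x l) L' (r :: Rs') = EV a x p q (l :: L') (r :: Rs') + (p * x l - a l * q) / 2.
    by rewrite EV_consL; ring.
  have e2 : EV a x (p + a r) (q + x r) (l :: L') Rs' = EV a x p q (l :: L') (r :: Rs') - (p * x r - a r * q) / 2.
    by rewrite EV_consR; ring.
  rewrite /FF e1 e2 !eD !eN /=.
  have h5 := enz (EV a x p q (l :: L') (r :: Rs')).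
  rewrite exprS; field; rewrite ?h1 ?h1' ?h2 ?h2' ?h3 ?h3' ?h4 ?h5 ?h6 ?h6' ?oppr_eq0 ?oner_eq0 //.
Qed.

Lemma Z_H (R : fieldType) (T : eqType) (e : R -> R) (a x : T -> R) :
  (forall u v, e (u + v) = e u * e v) -> (forall u, e (- u) = (e u)^-1) -> (forall u, e u != 0) ->
  e 0 = 1 ->
  (forall c d, c != d -> al a x c != al a x d) ->
  forall n s p q z, size s = n -> uniq s -> (forall c, c \in s -> al a x c != z) ->
  Zsum e a x p q z s = Ssum s (FF e a x p q z).
Proof.
move=> eD eN enz e0 hinj; elim=> [|n IH] s p q z.
  move/size0nil => -> _ _.
  rewrite /Zsum /Ssum perms_nil !big_seq1 /=.
rewrite /FF /EV /= !sa_nil expr0.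
  have -> : 0 + 0 + (0 * q - p * 0) / 2 + (p * 0 - 0 * q) / 2 + (0 * 0 - 0 * 0) / 2 = 0 :> R by ring.
  by rewrite e0 !mulr1 invr1.
move=> ss us hz.
have ns : (0 < size s)%N by rewrite ss.
rewrite /Zsum perms_sum //.
transitivity (\sum_(c <- s) zet e (p * x c - a c * q) / (z - al a x c) *
                 Ssum (rem c s) (FF e a x (p + a c) (q + x c) (al a x c))).
  rewrite big_seq [RHS]big_seq; apply: eq_bigr => c hc.
  have ur : uniq (rem c s) by rewrite rem_uniq.
  rewrite -IH //; last 2 first.
  - by rewrite size_rem // ss.
  - move=> d; rewrite (mem_rem_uniq _ us) inE => /andP[dc _]; exact: hinj.
  rewrite /Zsum mulr_sumr; apply: eq_bigr => t _ /=.
  by rewrite invfM; ring.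
rewrite (@Ssum_eq _ _ s _ (fun L Rs =>
    (if L is l :: L' then - (e (- ((p * x l - a l * q) / 2)) / (z - al a x l))
        * FF e a x (p + a l) (q + x l) (al a x l) L' Rs else 0)
  + (if Rs is r :: Rs' then e ((p * x r - a r * q) / 2) / (z - al a x r)
        * FF e a x (p + a r) (q + x r) (al a x r) L Rs' else 0))); last first.
  move=> t k ht; have pt : perm_eq t s by rewrite -mem_permutations.
  apply: FF_split => //; rewrite cat_take_drop.
  - by rewrite (perm_uniq pt).
  - by move=> c; rewrite (perm_mem pt); exact: hz.
  - by rewrite -size_eq0 (perm_size pt) ss.
rewrite Ssum_add Ssum_head // Ssum_swap Ssum_head // -big_split /=.
apply: eq_bigr => c _.
rewrite Ssum_scale.
rewrite Ssum_scale.
have -> : Ssum (rem c s) (fun L => (FF e a x (p + a c) (q + x c) (al a x c))^~ L)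
   = Ssum (rem c s) (FF e a x (p + a c) (q + x c) (al a x c)) by rewrite [LHS]Ssum_swap.
rewrite /zet; ring.
Qed.

Lemma perm_sum_S (R : fieldType) (N : nat) (G : seq 'I_N -> R) :
  \sum_(s : 'S_N) G (map s (enum 'I_N)) = \sum_(t <- permutations (enum 'I_N)) G t.
Proof.
rewrite -(big_map (fun s : 'S_N => map s (enum 'I_N)) xpredT G).
apply: perm_big; apply: uniq_perm; last first.
- move=> t; rewrite mem_permutations; apply/mapP/idP.
    move=> [s _ ->]; apply: uniq_perm.
    + by rewrite map_inj_uniq ?enum_uniq //; exact: perm_inj.
    + exact: enum_uniq.
    + by move=> i; rewrite mem_enum -[i](permKV s) map_f // mem_enum.
  move=> pt.
  have pt' : perm_eq t (ord_tuple N) by [].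
  case/tuple_permP: pt' => p ->.
  exists p; first by rewrite mem_index_enum.
  rewrite /=.
  by apply: eq_map => i; rewrite tnth_ord_tuple.
- exact: permutations_uniq.
- rewrite map_inj_uniq ?index_enum_uniq // => s1 s2 /eq_in_map h.
  by apply/permP => i; apply: h; rewrite mem_enum.
Qed.

Lemma Eseq_nth (R : fieldType) (T : eqType) (a x : T -> R) (x0 : T) (s : seq T) :
  Eseq a x s = \sum_(0 <= i < size s) \sum_(0 <= j < size s | (i < j)%N)
     (a (nth x0 s i) * x (nth x0 s j) - a (nth x0 s j) * x (nth x0 s i)) / 2.
Proof.
elim: s => [|c s IH] /=; first by rewrite big_geq.
rewrite big_nat_recl //=; congr (_ + _).
  rewrite [RHS]big_mkcond big_nat_recl //= add0r (big_nth x0); apply: eq_big_nat => j _.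
  by [].
rewrite IH; apply: eq_big_nat => i _.
rewrite [RHS]big_mkcond big_nat_recl //= add0r [LHS]big_mkcond; apply: eq_big_nat => j _.
by [].
Qed.

Lemma chain_nth (R : fieldType) (T : eqType) (a x : T -> R) (x0 : T) c (t : seq T) :
  chain a x (al a x c) t = \prod_(0 <= j < size t)
     (al a x (nth x0 (c :: t) j) - al a x (nth x0 (c :: t) j.+1)).
Proof.
elim: t c => [|d t IH] c /=; first by rewrite big_geq.
by rewrite big_nat_recl // IH.
Qed.

Lemma Zeta_nth (R : fieldType) (T : eqType) (e : R -> R) (a x : T -> R) (x0 : T) p q (t : seq T) :
  Zeta e a x p q t = \prod_(0 <= j < size t)
     zet e ((p + \sum_(0 <= k < j) a (nth x0 t k)) * x (nth x0 t j)
            - a (nth x0 t j) * (q + \sum_(0 <= k < j) x (nth x0 t k))).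
Proof.
elim: t p q => [|d t IH] p q /=; first by rewrite big_geq.
rewrite big_nat_recl // IH; congr (_ * _).
  by rewrite !big_geq // !addr0.
apply: eq_big_nat => j _.
by rewrite !big_nat_recl //= !addrA.
Qed.

Lemma term_conv (R : fieldType) (T : eqType) (e : R -> R) (a x : T -> R) (x0 c : T) (t : seq T) (n : nat) :
  size t = n -> (0 < n)%N -> (forall d, x d != 0) -> chain a x (al a x c) t != 0 ->
  (\prod_(1 <= j < n) x (nth x0 (c :: t) j)) *
  (\prod_(0 <= j < n) zet e ((\sum_(0 <= k < j.+1) a (nth x0 (c :: t) k)) * x (nth x0 (c :: t) j.+1)
        - a (nth x0 (c :: t) j.+1) * (\sum_(0 <= k < j.+1) x (nth x0 (c :: t) k)))) /
  (\prod_(0 <= j < n) (a (nth x0 (c :: t) j) * x (nth x0 (c :: t) j.+1)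
        - a (nth x0 (c :: t) j.+1) * x (nth x0 (c :: t) j)))
  = (\prod_(d <- c :: t) x d)^-1 * (Zeta e a x (a c) (x c) t / chain a x (al a x c) t).
Proof.
move=> st n0 hx hc.
have pnz : forall (r : seq nat) (F : nat -> T), \prod_(j <- r) x (F j) != 0.
  by move=> r F; rewrite prodf_seq_neq0; apply/allP => j _; exact: hx.
rewrite (Zeta_nth _ _ _ x0) st.
have -> : \prod_(0 <= j < n) zet e ((\sum_(0 <= k < j.+1) a (nth x0 (c :: t) k)) * x (nth x0 (c :: t) j.+1)
        - a (nth x0 (c :: t) j.+1) * (\sum_(0 <= k < j.+1) x (nth x0 (c :: t) k)))
  = \prod_(0 <= j < n) zet e ((a c + \sum_(0 <= k < j) a (nth x0 t k)) * x (nth x0 t j)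
        - a (nth x0 t j) * (x c + \sum_(0 <= k < j) x (nth x0 t k))).
  by apply: eq_big_nat => j _; rewrite !big_nat_recl.
have -> : \prod_(0 <= j < n) (a (nth x0 (c :: t) j) * x (nth x0 (c :: t) j.+1)
        - a (nth x0 (c :: t) j.+1) * x (nth x0 (c :: t) j))
  = chain a x (al a x c) t * (\prod_(0 <= j < n) x (nth x0 (c :: t) j) *
          \prod_(0 <= j < n) x (nth x0 (c :: t) j.+1)).
  rewrite (chain_nth _ _ x0) st -!big_split /=; apply: eq_big_nat => j _.
  rewrite /al; field; rewrite !hx //.
have -> : \prod_(d <- c :: t) x d = \prod_(0 <= j < n) x (nth x0 (c :: t) j) * x (nth x0 (c :: t) n).
  by rewrite (big_nth x0) /= st big_nat_recr.
have -> : \prod_(0 <= j < n) x (nth x0 (c :: t) j.+1) =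
    \prod_(1 <= j < n) x (nth x0 (c :: t) j) * x (nth x0 (c :: t) n).
  by rewrite -(big_add1 _ _ 0 n.+1 xpredT (fun j => x (nth x0 (c :: t) j))) /= big_nat_recr.
have h1 := pnz (index_iota 1 n) (nth x0 (c :: t)).
have h2 := pnz (index_iota 0 n) (nth x0 (c :: t)).
have h3 := hx (nth x0 (c :: t) n).
field; rewrite ?h1 ?h2 ?h3 ?hc //.
Qed.


Unset Implicit Arguments. Set Strict Implicit. Set Printing Implicit Defensive.


Lemma nth_enum_inord (n k : nat) : (k < n.+1)%N -> nth ord0 (enum 'I_n.+1) k = inord k.
Proof. by move=> hk; apply: val_inj; rewrite /= nth_enum_ord // inordK. Qed.

Lemma map_nth_inord (n k : nat) (s : 'S_n.+1) : (k < n.+1)%N ->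
  nth ord0 (map s (enum 'I_n.+1)) k = s (inord k).
Proof. by move=> hk; rewrite (nth_map ord0) ?size_enum_ord // nth_enum_inord. Qed.

Lemma rhs_conv (R : realType) (n : nat) (a x : 'I_n.+1 -> R) :
  Prop31_rhs a x = (\prod_(i < n.+1) x i)^-1 *
     \sum_(t <- permutations (enum 'I_n.+1)) Phi expR a x t.
Proof.
rewrite /Prop31_rhs -(perm_sum_S (Phi expR a x)); congr (_ * _); apply: eq_bigr => s _.
rewrite /Phi; congr (expR _ / _).
  rewrite (Eseq_nth _ _ ord0) size_map size_enum_ord big_mkord; apply: eq_bigr => i _.
  rewrite big_mkord; apply: eq_bigr => j _.
  rewrite !(nth_map ord0) -?enumT ?size_enum_ord ?nth_ord_enum //.
case eqs : [seq s i | i <- enum 'I_n.+1] => [|c t].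
  by move: (size_map s (enum 'I_n.+1)); rewrite eqs size_enum_ord.
have st : size t = n by move: (size_map s (enum 'I_n.+1)); rewrite eqs size_enum_ord => -[].
have ht : forall j, (j < n.+1)%N -> nth ord0 (c :: t) j = s (inord j).
  by move=> k hk; rewrite -eqs map_nth_inord.
rewrite /= (chain_nth _ _ ord0) st; apply: eq_big_nat => j /andP[_ hj].
by rewrite /ujk /al !ht // ltnW.
Qed.

Lemma al_inj (R : realType) (n : nat) (a x : 'I_n.+1 -> R)
  (hx : forall i, x i != 0)
  (hax : forall i j, i != j -> a i * x j - a j * x i != 0) :
  forall c d, c != d -> al a x c != al a x d.
Proof.
move=> c d cd; apply: contra (hax c d cd) => /eqP h.
have -> : a c * x d - a d * x c = (a c / x c - a d / x d) * (x c * x d).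
  by field; rewrite !hx.
by rewrite -/(al a x c) -/(al a x d) h subrr mul0r.
Qed.

Lemma rhs_Z (R : realType) (n : nat) (a x : 'I_n.+1 -> R)
  (hx : forall i, x i != 0)
  (hax : forall i j, i != j -> a i * x j - a j * x i != 0) :
  Prop31_rhs a x = (\prod_(i < n.+1) x i)^-1 *
     Zsum expR a x (a ord0) (x ord0) (al a x ord0) (map (lift ord0) (enum 'I_n)).
Proof.
have u := enum_uniq 'I_n.+1; rewrite enum_ordSl /= in u; case/andP: u => u0 u.
rewrite rhs_conv enum_ordSl RHS_H //.
have hinj := @al_inj R n a x hx hax.
rewrite (@Z_H R _ expR a x _ _ _ _ hinj _ _ _ _ _ (erefl _)) //.
- by move=> ? ?; rewrite expRD.
- by move=> ?; rewrite expRN.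
- by move=> ?; rewrite expR_eq0.
- by rewrite expR0.
- move=> c hc; rewrite eq_sym; apply: hinj.
  by apply/eqP => h; move: u0; rewrite {1}h hc.
Qed.

Definition Bd (R : realType) (n m : nat) (a x : 'I_n.+1 -> R) (t : nat -> 'I_n.+1) : R :=
  (\prod_(1 <= j < m) x (t j)) *
  (\prod_(0 <= j < m) zet expR ((\sum_(0 <= k < j.+1) a (t k)) * x (t j.+1)
        - a (t j.+1) * (\sum_(0 <= k < j.+1) x (t k)))) /
  (\prod_(0 <= j < m) (a (t j) * x (t j.+1) - a (t j.+1) * x (t j))).

Theorem proposition3p1 (R : realType) (n : nat) (a x : 'I_n.+1 -> R)
  (hx : forall i, x i != 0)
  (hax : forall i j, i != j -> a i * x j - a j * x i != 0) :
  Pn a x = Prop31_rhs a x.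
Proof.
rewrite rhs_Z //.
have hinj := @al_inj R n a x hx hax.
case: n a x hx hax hinj => [|n] a x hx hax hinj.
  by rewrite /Pn enum_ord0 /= /Zsum perms_nil big_seq1 /= big_ord1 divr1 mulr1.
rewrite /Pn big_mkcond /=.
transitivity (\sum_(s : 'S_n.+2) (fun l => if nth ord0 l 0 == ord0
          then @Bd R n.+1 n.+1 a x (nth ord0 l) else 0) (map s (enum 'I_n.+2))).
  apply: eq_bigr => s _ /=.
  rewrite (@map_nth_inord _ 0 s) //.
  have -> : inord 0 = ord0 :> 'I_n.+2 by apply: val_inj; rewrite /= inordK.
  case: eqP => h; last by [].
  change (@Bd R n.+1 n.+1 a x (fun k => s (inord k)) = @Bd R n.+1 n.+1 a x (nth ord0 (map s (enum 'I_n.+2)))).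
  congr Bd; apply: funext => k.
  case: (ltnP k n.+2) => hk; first by rewrite map_nth_inord.
  rewrite nth_default; last by rewrite size_map -?enumT size_enum_ord.
  have -> : inord k = ord0 :> 'I_n.+2.
    by apply: val_inj; rewrite /inord /insubd insubN // -leqNgt.
  by rewrite h.
have u := enum_uniq 'I_n.+2; rewrite enum_ordSl /= in u; case/andP: u => u0 u.
rewrite (perm_sum_S (fun l => if nth ord0 l 0 == ord0
          then @Bd R n.+1 n.+1 a x (nth ord0 l) else 0)).
rewrite enum_ordSl perms_sum //= ?u0 ?u // big_cons /=.
rewrite [X in _ + X]big1_seq ?addr0; last first.
  move=> c /andP[_ hc]; apply: big1 => t _.
  have -> : (c == ord0) = false by apply/negbTE/eqP => h; move: u0; rewrite -{1}h hc.
  by [].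
rewrite /Zsum mulr_sumr !big_seq; apply: eq_bigr => t ht.
have st : size t = n.+1 by rewrite (perms_size ht) size_map size_enum_ord.
have pt : perm_eq t [seq lift ord0 i | i <- enum 'I_n.+1] by rewrite -mem_permutations.
rewrite /Bd (@term_conv R _ expR a x ord0 ord0 t n.+1) //; last first.
  apply: chain_neq0 => //; first by rewrite (perm_uniq pt).
  move=> c hc; apply: hinj; apply/eqP => h; by move: u0; rewrite -{1}h -(perm_mem pt) hc.
congr (_ * _); congr (_^-1).
rewrite (perm_big (enum 'I_n.+2)); last by rewrite -?enumT enum_ordSl perm_cons.
by rewrite big_enum; apply: eq_bigl => i; rewrite mem_index_enum.
Qed.
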